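(* Under the Kahan map $\mathcal K$ with step size $2\epsilon$ of the generalized Lotka–Volterra system, the functions $v_j$ transform as $\tilde v_j=v_j\dfrac{1+\epsilon H}{1-\epsilon H+2\epsilon v_j}$ for $j=1,\dots,n$, where $\tilde v_j:=a_1\tilde x_1+\dots+a_j\tilde x_j$; in particular $\tilde H=H$.
   Context: $(a_1,\dots,a_n)\in\mathbb R^n\setminus\{0\}$, $H=a_1x_1+\dots+a_nx_n$, $v_0:=0$, $v_i:=a_1x_1+\dots+a_ix_i$. The Kahan map with step size $2\epsilon$ is the map $x\mapsto\tilde x$ implicitly defined by $\tilde x_i-x_i=\epsilon\,x_i(H-\tilde v_i-\tilde v_{i-1})+\epsilon\,\tilde x_i(H-v_i-v_{i-1})$ ($i=1,\dots,n$), with $\tilde v_i$ as defined and $\tilde v_0=0$; this is the Kahan discretization (with step $2\epsilon$) of $\dot x_i=x_i(H-v_i-v_{i-1})$, which equals $\dot x_i=x_i\big(\sum_{j>i}a_jx_j-\sum_{j<i}a_jx_j\big)$. *)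

(* Defs.v *)
From HB Require Import structures.
From mathcomp Require Import all_boot all_order all_algebra.
Set Implicit Arguments. Unset Strict Implicit. Unset Printing Implicit Defensive.
Import Order.TTheory GRing.Theory Num.Theory.
Local Open Scope ring_scope.

(* Coordinates are indexed 0-based by 'I_n: the paper's x_{i} is x (i-1).
   vpref a x m = a_1 x_1 + ... + a_m x_m  (the paper's v_m), with v_0 = 0. *)
Definition vpref (R : nzRingType) (n : nat) (a x : 'I_n -> R) (m : nat) : R :=
  \sum_(k < n | (k < m)%N) a k * x k.

Definition Hfun (R : nzRingType) (n : nat) (a x : 'I_n -> R) : R := vpref a x n.

(* The implicit equations defining the Kahan map x |-> xt with step 2*eps:
   xt_i - x_i = eps x_i (H - vt_i - vt_{i-1}) + eps xt_i (H - v_i - v_{i-1}),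
   for the paper's i = (0-based i) + 1. *)
Definition kahan_eqs (R : nzRingType) (n : nat) (a : 'I_n -> R) (eps : R)
    (x xt : 'I_n -> R) : Prop :=
  forall i : 'I_n,
    xt i - x i =
      eps * x i * (Hfun a x - vpref a xt i.+1 - vpref a xt i)
    + eps * xt i * (Hfun a x - vpref a x i.+1 - vpref a x i).

(* Main.v *)
Require Import Defs.
From HB Require Import structures.
From mathcomp Require Import all_boot all_order all_algebra.
From mathcomp Require Import ring.
Import Order.TTheory GRing.Theory Num.Theory.
Set Implicit Arguments.
Local Open Scope ring_scope.

Lemma vpref0 (R : nzRingType) n (a x : 'I_n -> R) : vpref a x 0 = 0.
Proof. by rewrite /vpref big1 // => k; rewrite ltn0. Qed.

Lemma vprefS (R : nzRingType) n (a x : 'I_n -> R) (i : 'I_n) :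
  vpref a x i.+1 = vpref a x i + a i * x i.
Proof.
rewrite /vpref (bigD1 i) ?ltnSn //= addrC; congr (_ + _).
apply: eq_bigl => k; rewrite ltnS [(k < i)%N]ltn_neqAle andbC //.
Qed.

Lemma inv_step (R : comNzRingType) (eps H v v' w w' p q : R) :
  v' = v + p -> w' = w + q ->
  q - p = eps * p * (H - w' - w) + eps * q * (H - v' - v) ->
  w * (1 - eps * H + 2 * eps * v) = v * (1 + eps * H) ->
  w' * (1 - eps * H + 2 * eps * v') = v' * (1 + eps * H).
Proof.
move=> -> -> E IH; apply/eqP; rewrite -subr_eq0.
have -> : (w + q) * (1 - eps * H + 2 * eps * (v + p)) - (v + p) * (1 + eps * H)
  = (w * (1 - eps * H + 2 * eps * v) - v * (1 + eps * H))
    + ((q - p) - (eps * p * (H - (w + q) - w) + eps * q * (H - (v + p) - v))) by ring.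
by rewrite IH E !subrr addr0.
Qed.

Theorem mainTheorem7 (R : realFieldType) (n : nat) (a : 'I_n -> R)
    (eps : R) (x xt : 'I_n -> R) :
  (exists i : 'I_n, a i != 0) ->
  kahan_eqs a eps x xt ->
  (forall j : nat, (1 <= j <= n)%N ->
     1 - eps * Hfun a x + 2 * eps * vpref a x j != 0) ->
  (forall j : nat, (1 <= j <= n)%N ->
     vpref a xt j =
       vpref a x j * (1 + eps * Hfun a x)
         / (1 - eps * Hfun a x + 2 * eps * vpref a x j))
  /\ Hfun a xt = Hfun a x.
Proof.
move=> [i0 _] Hk Hd.
have inv : forall m, (m <= n)%N ->
  vpref a xt m * (1 - eps * Hfun a x + 2 * eps * vpref a x m)
  = vpref a x m * (1 + eps * Hfun a x).
  elim=> [|m IH] Hm; first by rewrite !vpref0 !mul0r.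
  pose i := Ordinal Hm.
  apply: (@inv_step _ eps (Hfun a x) (vpref a x m) (vpref a x m.+1)
           (vpref a xt m) (vpref a xt m.+1) (a i * x i) (a i * xt i)).
  - have := @vprefS _ _ a x i; exact.
  - have := @vprefS _ _ a xt i; exact.
  - have E := Hk i.
    have -> : a i * xt i - a i * x i = a i * (xt i - x i) by ring.
    rewrite E /=. ring.
  - by apply: IH; apply: ltnW.
have main : forall j, (1 <= j <= n)%N ->
  vpref a xt j = vpref a x j * (1 + eps * Hfun a x)
         / (1 - eps * Hfun a x + 2 * eps * vpref a x j).
  move=> j /andP[j1 jn]; rewrite -(inv j jn) mulfK //; apply: Hd.
  by rewrite j1.
split=> //.
have n1 : (1 <= n)%N by case: n a x xt i0 {Hk Hd inv main} => [|n] ? ? ? [].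
rewrite /Hfun (main n) ?n1 ?leqnn //.
have Hd' := Hd n; rewrite n1 leqnn /= in Hd'.
have HH : vpref a x n = Hfun a x by [].
rewrite HH in Hd' *.
have -> : 1 - eps * Hfun a x + 2 * eps * Hfun a x = 1 + eps * Hfun a x by ring.
rewrite mulfK //.
by have := Hd' erefl; rewrite (_ : 1 - eps * Hfun a x + 2 * eps * Hfun a x = 1 + eps * Hfun a x) //; ring.
Qed.
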